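(* Let $w$ be a weight function on the unit circle, normalized and with orthonormal polynomials $\phi_n$ as described in the context. Assume that $w$ is differentiable in a neighborhood of the unit circle, has moments of all integral orders, and that the integrals $$\int_{|\zeta|=1}\frac{v'(z)-v'(\zeta)}{z-\zeta}\,\zeta^m\,w(\zeta)\,\frac{d\zeta}{i\zeta}$$ exist for all integers $m$, where $v=-\log w$. Then for every $n\ge 1$, $$\phi_n'(z)=n\frac{\kappa_{n-1}}{\kappa_n}\phi_{n-1}(z)-i\,\phi_n^*(z)\int_{|\zeta|=1}\frac{v'(z)-v'(\zeta)}{z-\zeta}\,\phi_n(\zeta)\overline{\phi_n^*(\zeta)}\,w(\zeta)\,d\zeta+i\,\phi_n(z)\int_{|\zeta|=1}\frac{v'(z)-v'(\zeta)}{z-\zeta}\,\phi_n(\zeta)\overline{\phi_n(\zeta)}\,w(\zeta)\,d\zeta .$$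
   Context: Let $w$ be a positive weight function on the unit circle normalized by $\int_{|\zeta|=1}w(\zeta)\frac{d\zeta}{i\zeta}=1$; all contour integrals over $|\zeta|=1$ are taken counterclockwise. Let $\phi_n(z)=\kappa_n z^n+\ell_n z^{n-1}+\cdots$, with $\kappa_n>0$, be the orthonormal polynomials: $\int_{|\zeta|=1}\phi_m(\zeta)\overline{\phi_n(\zeta)}w(\zeta)\frac{d\zeta}{i\zeta}=\delta_{m,n}$. The reciprocal polynomial of a degree-$n$ polynomial $f(z)=\sum_{k=0}^n a_kz^k$ is $f^*(z)=\sum_{k=0}^n\overline{a_k}z^{n-k}$. The external field is $v(z)$ defined by $w(z)=\exp(-v(z))$. *)

(* Defs.v *)
From Stdlib Require Import Reals.
From Coquelicot Require Import Coquelicot.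
Open Scope R_scope.

Definition cexp (z : C) : C :=
  (exp (Re z) * cos (Im z), exp (Re z) * sin (Im z)).

Definition eit (t : R) : C := (cos t, sin t).

Definition unit_circle (z : C) : Prop := Cmod z = 1.

Definition cpowZ (z : C) (m : Z) : C :=
  match m with
  | Z0 => (RtoC 1)
  | Zpos p => pow_n z (Pos.to_nat p)
  | Zneg p => pow_n (Cinv z) (Pos.to_nat p)
  end.

Definition peval (c : nat -> C) (n : nat) (z : C) : C :=
  sum_n (fun k => Cmult (c k) (pow_n z k)) n.

Definition precip (c : nat -> C) (n : nat) (z : C) : C :=
  sum_n (fun k => Cmult (Cconj (c k)) (pow_n z (n - k))) n.

(* contour integrals over |zeta| = 1, counterclockwise, zeta = e^{i t}:
   cint_dm f  = \int f(zeta) dzeta/(i zeta) = \int_0^{2pi} f(e^{it}) dt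
   cint_dz f  = \int f(zeta) dzeta          = \int_0^{2pi} f(e^{it}) i e^{it} dt *)
Definition cint_dm (f : C -> C) : C :=
  @RInt C_R_CompleteNormedModule (fun t => f (eit t)) 0 (2 * PI).
Definition cint_dz (f : C -> C) : C :=
  @RInt C_R_CompleteNormedModule
    (fun t => Cmult (f (eit t)) (Cmult Ci (eit t))) 0 (2 * PI).
Definition ex_cint_dm (f : C -> C) : Prop :=
  @ex_RInt C_R_NormedModule (fun t => f (eit t)) 0 (2 * PI).

(* Main.v *)
Require Import Defs.
From Stdlib Require Import Reals Lra Lia ZArith ClassicalEpsilon.
From Coquelicot Require Import Coquelicot.
Open Scope R_scope.

Lemma Ceq (x y : C) : fst x = fst y -> snd x = snd y -> x = y.
Proof. destruct x, y; simpl; intros; subst; auto. Qed.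

Lemma eit_add a b : eit (a + b) = Cmult (eit a) (eit b).
Proof. unfold eit, Cmult; apply Ceq; simpl; rewrite ?cos_plus, ?sin_plus; ring. Qed.

Lemma eit_0 : eit 0 = RtoC 1.
Proof. unfold eit; rewrite cos_0, sin_0; reflexivity. Qed.

Lemma eit_inv t : Cmult (eit t) (eit (-t)) = RtoC 1.
Proof. rewrite <- eit_add. replace (t + - t) with 0 by ring. apply eit_0. Qed.

Lemma conj_eit t : Cconj (eit t) = eit (-t).
Proof. unfold eit, Cconj; apply Ceq; simpl; rewrite ?cos_neg, ?sin_neg; ring. Qed.

Lemma cos2sin2 t : cos t * (cos t * 1) + sin t * (sin t * 1) = 1.
Proof. pose proof (sin2_cos2 t) as H; unfold Rsqr in H; lra. Qed.

Lemma Cinv_eit t : Cinv (eit t) = eit (-t).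
Proof.
  unfold eit, Cinv; apply Ceq; simpl; rewrite ?cos_neg, ?sin_neg, cos2sin2; field.
Qed.

Lemma pow_eit t k : pow_n (eit t) k = eit (INR k * t).
Proof.
  induction k.
  - simpl. rewrite Rmult_0_l, eit_0. reflexivity.
  - change (pow_n (eit t) (S k)) with (Cmult (eit t) (pow_n (eit t) k)).
    rewrite IHk, S_INR, <- eit_add. f_equal; ring.
Qed.

Lemma cpowZ_eit t m : cpowZ (eit t) m = eit (IZR m * t).
Proof.
  destruct m; simpl.
  - rewrite Rmult_0_l, eit_0; reflexivity.
  - rewrite pow_eit, INR_IPR; reflexivity.
  - rewrite Cinv_eit, pow_eit, INR_IPR; change (IZR (Z.neg p)) with (- IPR p); f_equal; ring.
Qed.

Lemma cpowZ_add t m k : Cmult (cpowZ (eit t) m) (cpowZ (eit t) k) = cpowZ (eit t) (m + k).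
Proof. rewrite !cpowZ_eit, <- eit_add, plus_IZR. f_equal; ring. Qed.

Lemma cpowZ_nat t k : pow_n (eit t) k = cpowZ (eit t) (Z.of_nat k).
Proof. rewrite cpowZ_eit, pow_eit, <- INR_IZR_INZ; reflexivity. Qed.

Lemma cpowZ_cnat t k : pow_n (Cconj (eit t)) k = cpowZ (eit t) (- Z.of_nat k).
Proof. rewrite cpowZ_eit, conj_eit, pow_eit, opp_IZR, <- INR_IZR_INZ; f_equal; ring. Qed.

Ltac cring := match goal with |- @eq _ ?a ?b =>
  apply (@eq_trans C a (Cmult (RtoC 1) a) b); [symmetry; ring|ring] end.

Lemma sorted_hd_last (l : list R) (y : R) : sorted Rle (y :: l) -> y <= seq.last y l.
Proof.
  revert y; induction l as [|z l IH]; intros y H; simpl; [lra|].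
  destruct H as [H1 H2]. specialize (IH z H2). lra.
Qed.

Section FTC.
Variables (F f : R -> R) (a b : R) (tg : R -> R -> R).
Hypothesis Htg : forall x y, a <= x -> x <= y -> y <= b -> F y - F x = f (tg x y) * (y - x).

Lemma tele (l : list R) : forall (x t0 : R), sorted Rle (x :: l) -> a <= x -> seq.last x l <= b ->
  seq.foldr plus zero (seq.pairmap (fun p q : R * R => scal (fst q - fst p) (f (snd q))) (x, t0)
     (seq.pairmap (fun x y : R => (y, tg x y)) x l)) = F (seq.last x l) - F x.
Proof.
  induction l as [|y l IH]; intros x t0 Hs Ha Hb.
  - simpl. unfold zero; simpl; ring.
  - simpl. simpl in Hb. destruct Hs as [Hxy Hs].
    pose proof (sorted_hd_last l y Hs).
    rewrite IH; [|exact Hs|lra|exact Hb].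
    assert (E := Htg x y Ha Hxy ltac:(lra)).
    unfold plus, scal; simpl. unfold mult; simpl.
    transitivity ((F y - F x) + (F (seq.last y l) - F y)); [rewrite E; ring | ring].
Qed.
End FTC.

Lemma FTC_gen (F f : R -> R) (a b : R) : a < b ->
  (forall x, a <= x <= b -> is_derive F x (f x)) -> ex_RInt f a b ->
  is_RInt f a b (F b - F a).
Proof.
  intros Hab Hd [l Hl].
  set (P x y := exists c, x <= c <= y /\ F y - F x = f c * (y - x)).
  set (tg x y := match excluded_middle_informative (P x y) with
                 | left H => proj1_sig (constructive_indefinite_description _ H)
                 | right _ => x end).
  assert (Htg1 : forall x y, x <= y -> x <= tg x y <= y).
  { intros x y Hxy; unfold tg; destruct excluded_middle_informative as [H|H].
    - destruct constructive_indefinite_description as [c Hc]; simpl; tauto.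
    - lra. }
  assert (Htg2 : forall x y, a <= x -> x <= y -> y <= b -> F y - F x = f (tg x y) * (y - x)).
  { intros x y H1 H2 H3.
    assert (HP : P x y).
    { destruct (MVT_gen F x y f) as [c [Hc1 Hc2]].
      - intros z Hz. apply Hd. rewrite Rmin_left in Hz by lra. rewrite Rmax_right in Hz by lra. lra.
      - intros z Hz. rewrite Rmin_left in Hz by lra. rewrite Rmax_right in Hz by lra.
        apply continuity_pt_filterlim. apply (ex_derive_continuous F z).
        exists (f z). apply Hd; lra.
      - exists c. rewrite Rmin_left in Hc1 by lra. rewrite Rmax_right in Hc1 by lra. tauto. }
    unfold tg; destruct excluded_middle_informative as [H|H]; [|tauto].
    destruct constructive_indefinite_description as [c Hc]; simpl; tauto. }
  replace (F b - F a) with l; [exact Hl|].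
  apply Rminus_diag_uniq_sym. apply Rabs_eq_0.
  apply Rle_antisym; [|apply Rabs_pos].
  apply le_epsilon. intros eps Heps. rewrite Rplus_0_l.
  assert (Hball := Hl (ball l (mkposreal eps Heps)) (locally_ball l _)).
  destruct Hball as [d Hd'].
  destruct (seq_step_unif_part_ex a b d) as [N HN].
  destruct (Riemann_fine_unif_part tg a b N Htg1 ltac:(lra)) as [Hs1 [Hs2 [Hs3 Hs4]]].
  assert (Hsize : (0 < seq.size (unif_part a b N))%nat).
  { unfold unif_part. rewrite seq.size_mkseq. lia. }
  specialize (Hd' (SF_seq_f2 tg (unif_part a b N))).
  rewrite SF_lx_f2 in Hd' by exact Hsize.
  specialize (Hd' HN).
  rewrite Rmin_left, Rmax_right in Hd' by lra.
  rewrite SF_lx_f2 in Hs4 by exact Hsize.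
  specialize (Hd' (conj Hs2 (conj Hs3 Hs4))).
  rewrite sign_eq_1 in Hd' by lra.
  assert (HR : @Riemann_sum (NormedModule.ModuleSpace R_AbsRing R_NormedModule) f (SF_seq_f2 tg (unif_part a b N)) = F b - F a).
  { assert (Hso := unif_part_sort a b N ltac:(lra)).
    remember (unif_part a b N) as L eqn:EL. clear EL.
    unfold Riemann_sum, SF_seq_f2.
    destruct L as [|x0 l0]; [simpl in Hsize; lia|].
    cbn [seq.head seq.behead SF_h SF_t] in *.
    refine (eq_trans (tele F f a b tg Htg2 l0 x0 zero _ _ _) _).
    - exact Hso.
    - simpl in Hs3; lra.
    - simpl in Hs4; lra.
    - simpl in Hs3, Hs4. congruence. }
  rewrite HR in Hd'.
  assert (Hd2 : Rabs (1 * (F b - F a) + - l) < eps) by exact Hd'.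
  rewrite Rmult_1_l in Hd2. unfold Rminus in *. lra.
Qed.

Definition pd (g : R -> C) (t : R) (L : C) : Prop :=
  forall eps : R, 0 < eps -> exists delta : R, 0 < delta /\
    forall h : R, Rabs h < delta ->
      Cmod (Cminus (Cminus (g (t + h)) (g t)) (Cmult (RtoC h) L)) <= eps * Rabs h.

Lemma fst_le_Cmod (z : C) : Rabs (fst z) <= Cmod z.
Proof. pose proof (Rmax_Cmod z). pose proof (Rmax_l (Rabs (fst z)) (Rabs (snd z))). lra. Qed.
Lemma snd_le_Cmod (z : C) : Rabs (snd z) <= Cmod z.
Proof. pose proof (Rmax_Cmod z). pose proof (Rmax_r (Rabs (fst z)) (Rabs (snd z))). lra. Qed.
Lemma Cmod_le_sum (z : C) : Cmod z <= Rabs (fst z) + Rabs (snd z).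
Proof.
  destruct z as [x y]; unfold Cmod; simpl.
  pose proof (Rabs_pos x); pose proof (Rabs_pos y).
  rewrite <- (sqrt_square (Rabs x + Rabs y)) by lra.
  apply sqrt_le_1_alt. pose proof (pow2_abs x); pose proof (pow2_abs y).
  simpl in *. nra.
Qed.

Lemma C_deriv_eps (f : C -> C) (x d : C) :
  @is_derive C_AbsRing C_NormedModule f x d ->
  forall eps, 0 < eps -> exists delta, 0 < delta /\ forall y, Cmod (Cminus y x) < delta ->
    Cmod (Cminus (Cminus (f y) (f x)) (Cmult (Cminus y x) d)) <= eps * Cmod (Cminus y x).
Proof.
  intros [_ H] eps Heps.
  specialize (H x (fun P HP => HP) (mkposreal eps Heps)).
  destruct H as [del Hdel]. exists del. split; [apply cond_pos|].
  intros y Hy. apply (Hdel y). exact Hy.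
Qed.

Lemma real_eps (F : R -> R) (t l : R) : is_derive F t l ->
  forall eps, 0 < eps -> exists delta, 0 < delta /\ forall h, Rabs h < delta ->
    Rabs (F (t + h) - F t - h * l) <= eps * Rabs h.
Proof.
  intros H eps Heps. apply is_derive_Reals in H.
  destruct (H eps Heps) as [del Hdel]. exists del. split; [apply cond_pos|].
  intros h Hh. destruct (Req_dec h 0) as [->|Hn].
  - rewrite Rplus_0_r, Rabs_R0. replace (F t - F t - 0 * l) with 0 by ring. rewrite Rabs_R0; lra.
  - specialize (Hdel h Hn Hh).
    replace (F (t + h) - F t - h * l) with (h * ((F (t + h) - F t) / h - l)) by (field; auto).
    rewrite Rabs_mult. rewrite Rmult_comm. apply Rmult_le_compat_r; [apply Rabs_pos|lra].
Qed.

Lemma pd_of_parts (g : R -> C) (t : R) (L : C) :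
  is_derive (fun s => fst (g s)) t (fst L) -> is_derive (fun s => snd (g s)) t (snd L) -> pd g t L.
Proof.
  intros H1 H2 eps Heps.
  destruct (real_eps _ _ _ H1 (eps/2) ltac:(lra)) as [d1 [Hd1 Hd1']].
  destruct (real_eps _ _ _ H2 (eps/2) ltac:(lra)) as [d2 [Hd2 Hd2']].
  exists (Rmin d1 d2). split; [apply Rmin_glb_lt; auto|].
  intros h Hh. eapply Rle_trans; [apply Cmod_le_sum|].
  assert (Rabs h < d1) by (eapply Rlt_le_trans; [exact Hh|apply Rmin_l]).
  assert (Rabs h < d2) by (eapply Rlt_le_trans; [exact Hh|apply Rmin_r]).
  specialize (Hd1' h ltac:(assumption)). specialize (Hd2' h ltac:(assumption)).
  destruct (g (t + h)) as [p q]; destruct (g t) as [p0 q0]; destruct L as [l1 l2].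
  simpl in *. 
  replace (p + - p0 + - (h * l1 - 0 * l2)) with (p - p0 - h * l1) by ring.
  replace (q + - q0 + - (h * l2 + 0 * l1)) with (q - q0 - h * l2) by ring. lra.
Qed.

Lemma div_bound (X h e : R) : h <> 0 -> Rabs X <= e * Rabs h -> Rabs (X / h) <= e.
Proof.
  intros Hh H. unfold Rdiv; rewrite Rabs_mult, Rabs_inv.
  pose proof (Rabs_pos_lt h Hh).
  apply (Rmult_le_reg_r (Rabs h)); auto. field_simplify; [|lra]. lra.
Qed.

Lemma parts_of_pd (g : R -> C) (t : R) (L : C) : pd g t L ->
  is_derive (fun s => fst (g s)) t (fst L) /\ is_derive (fun s => snd (g s)) t (snd L).
Proof.
  intros H. split; apply is_derive_Reals; intros eps Heps;
  destruct (H (eps/2) ltac:(lra)) as [del [Hdel Hdel']];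
  exists (mkposreal del Hdel); intros h Hh0 Hh; simpl in Hh;
  specialize (Hdel' h Hh);
  [pose proof (fst_le_Cmod (Cminus (Cminus (g (t + h)) (g t)) (Cmult (RtoC h) L))) as HH
  |pose proof (snd_le_Cmod (Cminus (Cminus (g (t + h)) (g t)) (Cmult (RtoC h) L))) as HH];
  destruct (g (t + h)) as [p q]; destruct (g t) as [p0 q0]; destruct L as [l1 l2]; simpl in *.
  - replace ((p - p0) / h - l1) with ((p + - p0 + - (h * l1 - 0 * l2)) / h) by (field; auto).
    assert (Rabs ((p + - p0 + - (h * l1 - 0 * l2)) / h) <= eps/2) by (apply div_bound; auto; lra). lra.
  - replace ((q - q0) / h - l2) with ((q + - q0 + - (h * l2 + 0 * l1)) / h) by (field; auto).
    assert (Rabs ((q + - q0 + - (h * l2 + 0 * l1)) / h) <= eps/2) by (apply div_bound; auto; lra). lra.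
Qed.

Lemma pd_comp (f : C -> C) (g : R -> C) (t : R) (d L : C) :
  @is_derive C_AbsRing C_NormedModule f (g t) d -> pd g t L ->
  pd (fun s => f (g s)) t (Cmult L d).
Proof.
  intros Hf Hg eps Heps.
  set (A := Cmod L + 1).
  assert (HA : 0 < A) by (pose proof (Cmod_ge_0 L); unfold A; lra).
  assert (Hd0 : 0 <= Cmod d) by apply Cmod_ge_0.
  destruct (Hg 1 ltac:(lra)) as [d1 [Hd1 Hd1']].
  destruct (Hg (eps / (2 * (Cmod d + 1)))) as [d2 [Hd2 Hd2']].
  { apply Rdiv_lt_0_compat; lra. }
  destruct (C_deriv_eps f (g t) d Hf (eps / (2 * A))) as [d3 [Hd3 Hd3']].
  { apply Rdiv_lt_0_compat; lra. }
  exists (Rmin d1 (Rmin d2 (d3 / A))). split.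
  { apply Rmin_glb_lt; auto. apply Rmin_glb_lt; auto. apply Rdiv_lt_0_compat; lra. }
  intros h Hh.
  assert (H1 : Rabs h < d1) by (eapply Rlt_le_trans; [exact Hh|apply Rmin_l]).
  assert (H2 : Rabs h < d2) by (eapply Rlt_le_trans; [exact Hh|eapply Rle_trans; [apply Rmin_r|apply Rmin_l]]).
  assert (H3 : Rabs h < d3 / A) by (eapply Rlt_le_trans; [exact Hh|eapply Rle_trans; [apply Rmin_r|apply Rmin_r]]).
  specialize (Hd1' h H1). specialize (Hd2' h H2).
  set (D := Cminus (g (t + h)) (g t)) in *.
  assert (HD : Cmod D <= A * Rabs h).
  { replace D with (Cplus (Cminus D (Cmult (RtoC h) L)) (Cmult (RtoC h) L)) by ring.
    eapply Rle_trans; [apply Cmod_triangle|]. rewrite Cmod_mult, Cmod_R.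
    unfold A. pose proof (Rabs_pos h). nra. }
  assert (HD3 : Cmod (Cminus (g (t + h)) (g t)) < d3).
  { fold D. apply Rle_lt_trans with (A * Rabs h); auto.
    apply (Rmult_lt_reg_r (/ A)). apply Rinv_0_lt_compat; lra.
    replace (A * Rabs h * / A) with (Rabs h) by (field; lra). exact H3. }
  specialize (Hd3' _ HD3). fold D in Hd3'.
  replace (Cminus (Cminus (f (g (t + h))) (f (g t))) (Cmult (RtoC h) (Cmult L d)))
    with (Cplus (Cminus (Cminus (f (g (t + h))) (f (g t))) (Cmult D d))
                (Cmult (Cminus D (Cmult (RtoC h) L)) d)) by (unfold D; ring).
  eapply Rle_trans; [apply Cmod_triangle|]. rewrite Cmod_mult.
  assert (E1 : eps / (2 * A) * Cmod D <= eps / 2 * Rabs h).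
  { apply Rle_trans with (eps / (2 * A) * (A * Rabs h)).
    - apply Rmult_le_compat_l; auto. left; apply Rdiv_lt_0_compat; lra.
    - right; field; lra. }
  assert (E2 : Cmod (Cminus D (Cmult (RtoC h) L)) * Cmod d <= eps / 2 * Rabs h).
  { apply Rle_trans with (eps / (2 * (Cmod d + 1)) * Rabs h * Cmod d).
    - apply Rmult_le_compat_r; auto.
    - apply Rle_trans with (eps / (2 * (Cmod d + 1)) * Rabs h * (Cmod d + 1)).
      + apply Rmult_le_compat_l; [|lra]. apply Rmult_le_pos; [|apply Rabs_pos].
        left; apply Rdiv_lt_0_compat; lra.
      + right; field; lra. }
  lra.
Qed.

Lemma pd_eit (t : R) : pd eit t (Cmult Ci (eit t)).
Proof.
  apply pd_of_parts; unfold eit; simpl.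
  - replace (0 * cos t - 1 * sin t) with (- sin t) by ring. auto_derive; auto. ring.
  - replace (0 * sin t + 1 * cos t) with (cos t) by ring. auto_derive; auto. ring.
Qed.

Definition IsInt (f : R -> C) (l : C) : Prop := @is_RInt C_R_NormedModule f 0 (2 * PI) l.

Lemma IsInt_ext f g l : (forall t, f t = g t) -> IsInt f l -> IsInt g l.
Proof. intros H. apply is_RInt_ext. intros; auto. Qed.

Lemma IsInt_ext_val f l l' : l = l' -> IsInt f l -> IsInt f l'.
Proof. intros ->; auto. Qed.

Lemma IsInt_plus f g lf lg : IsInt f lf -> IsInt g lg -> IsInt (fun t => Cplus (f t) (g t)) (Cplus lf lg).
Proof. intros H1 H2. exact (is_RInt_plus _ _ _ _ _ _ H1 H2). Qed.

Lemma IsInt_minus f g lf lg : IsInt f lf -> IsInt g lg -> IsInt (fun t => Cminus (f t) (g t)) (Cminus lf lg).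
Proof. intros H1 H2. exact (is_RInt_minus _ _ _ _ _ _ H1 H2). Qed.

Lemma IsInt_zero : IsInt (fun _ => RtoC 0) (RtoC 0).
Proof.
  assert (H := is_RInt_const (V:=C_R_NormedModule) 0 (2*PI) (RtoC 0)).
  eapply IsInt_ext_val; [|exact H]. apply Ceq; simpl; change (scal (2 * PI - 0) 0) with ((2*PI-0) * 0); ring.
Qed.

Lemma IsInt_fst f l : IsInt f l -> is_RInt (fun t => fst (f t)) 0 (2*PI) (fst l).
Proof. intros H. exact (is_RInt_fct_extend_fst _ _ _ _ H). Qed.
Lemma IsInt_snd f l : IsInt f l -> is_RInt (fun t => snd (f t)) 0 (2*PI) (snd l).
Proof. intros H. exact (is_RInt_fct_extend_snd _ _ _ _ H). Qed.
Lemma IsInt_pair f l : is_RInt (fun t => fst (f t)) 0 (2*PI) (fst l) ->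
  is_RInt (fun t => snd (f t)) 0 (2*PI) (snd l) -> IsInt f l.
Proof.
  intros H1 H2. destruct l as [l1 l2].
  assert (H := is_RInt_fct_extend_pair (U:=R_NormedModule) (V:=R_NormedModule)
     (fun t => (fst (f t), snd (f t))) 0 (2*PI) l1 l2 H1 H2).
  eapply IsInt_ext; [|exact H]. intros t; simpl. destruct (f t); reflexivity.
Qed.

Lemma IsInt_mult_l (c : C) f l : IsInt f l -> IsInt (fun t => Cmult c (f t)) (Cmult c l).
Proof.
  intros H. pose proof (IsInt_fst _ _ H) as H1. pose proof (IsInt_snd _ _ H) as H2.
  apply IsInt_pair; simpl.
  - pose proof (is_RInt_minus _ _ _ _ _ _ (is_RInt_scal _ _ _ (fst c) _ H1) (is_RInt_scal _ _ _ (snd c) _ H2)) as H3.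
    exact H3.
  - pose proof (is_RInt_plus _ _ _ _ _ _ (is_RInt_scal _ _ _ (fst c) _ H2) (is_RInt_scal _ _ _ (snd c) _ H1)) as H3.
    exact H3.
Qed.

Lemma IsInt_mult_r (c : C) f l : IsInt f l -> IsInt (fun t => Cmult (f t) c) (Cmult l c).
Proof.
  intros H. apply (IsInt_ext (fun t => Cmult c (f t))); [intros; ring|].
  replace (Cmult l c) with (Cmult c l) by ring. apply IsInt_mult_l; auto.
Qed.

Lemma IsInt_sum (f : nat -> R -> C) (l : nat -> C) (N : nat) :
  (forall k, (k <= N)%nat -> IsInt (f k) (l k)) ->
  IsInt (fun t => sum_n (fun k => f k t) N) (sum_n l N).
Proof.
  induction N; intros H.
  - rewrite sum_O. eapply IsInt_ext; [|apply (H 0%nat (le_n _))]. intros t; rewrite sum_O; reflexivity.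
  - rewrite sum_Sn. eapply IsInt_ext; [|apply IsInt_plus; [apply IHN|apply (H (S N) (le_n _))]].
    + intros t; rewrite sum_Sn; reflexivity.
    + intros k Hk; apply H; lia.
Qed.

Lemma IsInt_unique f l l' : IsInt f l -> IsInt f l' -> l = l'.
Proof.
  intros H1 H2. unfold IsInt in *.
  rewrite <- (is_RInt_unique (V:=C_R_CompleteNormedModule) f 0 (2*PI) l H1).
  rewrite <- (is_RInt_unique (V:=C_R_CompleteNormedModule) f 0 (2*PI) l' H2). reflexivity.
Qed.

Lemma cos_sin_Z2PI (m : Z) : cos (IZR m * (2 * PI)) = 1 /\ sin (IZR m * (2 * PI)) = 0.
Proof.
  assert (Hn : forall k : nat, cos (INR k * (2 * PI)) = 1 /\ sin (INR k * (2 * PI)) = 0).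
  { intros k. pose proof (cos_period 0 k). pose proof (sin_period 0 k).
    rewrite Rplus_0_l, cos_0 in *. rewrite sin_0 in *.
    replace (INR k * (2 * PI)) with (2 * INR k * PI) by ring. auto. }
  destruct m.
  - simpl. rewrite Rmult_0_l, cos_0, sin_0. auto.
  - change (IZR (Z.pos p)) with (IPR p). rewrite <- INR_IPR. apply Hn.
  - change (IZR (Z.neg p)) with (- IPR p). rewrite <- INR_IPR.
    replace (- INR (Pos.to_nat p) * (2 * PI)) with (- (INR (Pos.to_nat p) * (2 * PI))) by ring.
    rewrite cos_neg, sin_neg. destruct (Hn (Pos.to_nat p)) as [-> ->]. split; ring.
Qed.

Lemma eit_2PI : eit (2 * PI) = eit 0.
Proof. unfold eit. rewrite cos_2PI, sin_2PI, cos_0, sin_0. reflexivity. Qed.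

Lemma cpowZ_succ t m : cpowZ (eit t) (m + 1) = Cmult (cpowZ (eit t) m) (eit t).
Proof.
  rewrite <- cpowZ_add. f_equal. change (Cmult (eit t) (RtoC 1) = eit t). ring.
Qed.

Section IBP.
Variables (w v dv : C -> C).
Hypothesis Hwv : forall t, w (eit t) = cexp (Copp (v (eit t))).
Hypothesis Hdv : forall t, @is_derive C_AbsRing C_NormedModule v (eit t) (dv (eit t)).

Lemma IBP_mono (m : Z) (M J : C) :
  IsInt (fun t => Cmult (cpowZ (eit t) m) (w (eit t))) M ->
  IsInt (fun t => Cmult (Cmult (dv (eit t)) (cpowZ (eit t) (m + 1))) (w (eit t))) J ->
  J = Cmult (RtoC (IZR m)) M.
Proof.
  intros HM HJ.
  set (V1 t := fst (v (eit t))). set (V2 t := snd (v (eit t))).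
  set (L t := Cmult (Cmult Ci (eit t)) (dv (eit t))).
  assert (HV : forall t, is_derive V1 t (fst (L t)) /\ is_derive V2 t (snd (L t))).
  { intros t. apply (parts_of_pd (fun s => v (eit s))).
    apply pd_comp; [apply Hdv|apply pd_eit]. }
  set (mr := IZR m).
  set (G1 t := exp (- V1 t) * cos (- V2 t) * cos (mr * t) - exp (- V1 t) * sin (- V2 t) * sin (mr * t)).
  set (G2 t := exp (- V1 t) * cos (- V2 t) * sin (mr * t) + exp (- V1 t) * sin (- V2 t) * cos (mr * t)).
  set (Gp t := Cmult (Cmult (w (eit t)) (cpowZ (eit t) m)) (Cminus (Cmult Ci (RtoC mr)) (L t))).
  assert (HGp : IsInt Gp (Cmult Ci (Cminus (Cmult (RtoC mr) M) J))).
  { apply (IsInt_ext (fun t => Cmult Ci (Cminus (Cmult (RtoC mr) (Cmult (cpowZ (eit t) m) (w (eit t))))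
       (Cmult (Cmult (dv (eit t)) (cpowZ (eit t) (m + 1))) (w (eit t)))))).
    - intros t. unfold Gp, L. rewrite cpowZ_succ. ring.
    - apply IsInt_mult_l. apply IsInt_minus; auto. apply IsInt_mult_l; auto. }
  assert (Hw : forall t, w (eit t) = (exp (- V1 t) * cos (- V2 t), exp (- V1 t) * sin (- V2 t))).
  { intros t. rewrite Hwv. unfold cexp, V1, V2. simpl. reflexivity. }
  assert (D1 : forall t, is_derive G1 t (fst (Gp t))).
  { intros t. destruct (HV t) as [H1 H2]. unfold G1.
    auto_derive.
    - repeat split; eexists; eauto.
    - replace (Derive (fun x => V1 x) t) with (fst (L t)) by (symmetry; apply is_derive_unique; exact H1).
      replace (Derive (fun x => V2 x) t) with (snd (L t)) by (symmetry; apply is_derive_unique; exact H2).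
      unfold Gp. rewrite Hw, cpowZ_eit. unfold eit, L, Cminus, Cmult, Cplus, Copp, Ci, RtoC. simpl.
      fold mr. ring. }
  assert (D2 : forall t, is_derive G2 t (snd (Gp t))).
  { intros t. destruct (HV t) as [H1 H2]. unfold G2.
    auto_derive.
    - repeat split; eexists; eauto.
    - replace (Derive (fun x => V1 x) t) with (fst (L t)) by (symmetry; apply is_derive_unique; exact H1).
      replace (Derive (fun x => V2 x) t) with (snd (L t)) by (symmetry; apply is_derive_unique; exact H2).
      unfold Gp. rewrite Hw, cpowZ_eit. unfold eit, L, Cminus, Cmult, Cplus, Copp, Ci, RtoC. simpl.
      fold mr. ring. }
  assert (HP : V1 (2 * PI) = V1 0 /\ V2 (2 * PI) = V2 0).
  { unfold V1, V2. rewrite eit_2PI. auto. }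
  destruct (cos_sin_Z2PI m) as [Hc Hs]. fold mr in Hc, Hs.
  assert (F1 : is_RInt (fun t => fst (Gp t)) 0 (2 * PI) (G1 (2 * PI) - G1 0)).
  { apply FTC_gen.
    - pose proof PI_RGT_0; lra.
    - intros; apply D1.
    - eexists. apply (IsInt_fst _ _ HGp). }
  assert (F2 : is_RInt (fun t => snd (Gp t)) 0 (2 * PI) (G2 (2 * PI) - G2 0)).
  { apply FTC_gen.
    - pose proof PI_RGT_0; lra.
    - intros; apply D2.
    - eexists. apply (IsInt_snd _ _ HGp). }
  assert (E1 : G1 (2 * PI) - G1 0 = 0).
  { unfold G1. destruct HP as [-> ->]. rewrite Hc, Hs. replace (mr * 0) with 0 by ring. rewrite cos_0, sin_0. ring. }
  assert (E2 : G2 (2 * PI) - G2 0 = 0).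
  { unfold G2. destruct HP as [-> ->]. rewrite Hc, Hs. replace (mr * 0) with 0 by ring. rewrite cos_0, sin_0. ring. }
  rewrite E1 in F1. rewrite E2 in F2.
  pose proof (is_RInt_unique _ _ _ _ F1) as U1.
  pose proof (is_RInt_unique _ _ _ _ (IsInt_fst _ _ HGp)) as U1'.
  pose proof (is_RInt_unique _ _ _ _ F2) as U2.
  pose proof (is_RInt_unique _ _ _ _ (IsInt_snd _ _ HGp)) as U2'.
  rewrite U1 in U1'. rewrite U2 in U2'.
  destruct (Cminus (Cmult (RtoC mr) M) J) as [x y] eqn:EX.
  simpl in U1', U2'.
  assert (x = 0) by lra. assert (y = 0) by lra. subst x y.
  assert (EQ : Cminus (Cmult (RtoC mr) M) J = RtoC 0) by (rewrite EX; reflexivity).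
  apply (f_equal (fun u => Cminus (Cmult (RtoC mr) M) u)) in EQ.
  replace J with (Cminus (Cmult (RtoC mr) M) (Cminus (Cmult (RtoC mr) M) J)) by ring.
  rewrite EX. apply Ceq; simpl; ring.
Qed.
End IBP.

Lemma sumC_S (f : nat -> C) N : sum_n f (S N) = Cplus (sum_n f N) (f (S N)) :> C.
Proof. exact (sum_Sn f N). Qed.
Lemma sumC_O (f : nat -> C) : sum_n f 0 = f 0%nat :> C.
Proof. exact (sum_O f). Qed.

Lemma sumC_ext (f g : nat -> C) N : (forall k, (k <= N)%nat -> f k = g k) -> sum_n f N = sum_n g N :> C.
Proof. apply sum_n_ext_loc. Qed.

Lemma sumC_zero (f : nat -> C) N : (forall k, (k <= N)%nat -> f k = RtoC 0) -> sum_n f N = RtoC 0 :> C.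
Proof.
  induction N; intros H.
  - rewrite sumC_O; apply H; lia.
  - rewrite sumC_S. rewrite IHN by (intros; apply H; lia). rewrite H by lia.
    apply Ceq; simpl; ring.
Qed.

Lemma sumC_plus (f g : nat -> C) N : sum_n (fun k => Cplus (f k) (g k)) N = Cplus (sum_n f N) (sum_n g N) :> C.
Proof. induction N; [rewrite !sumC_O; auto|rewrite !sumC_S, IHN; ring]. Qed.

Lemma sumC_minus (f g : nat -> C) N : sum_n (fun k => Cminus (f k) (g k)) N = Cminus (sum_n f N) (sum_n g N) :> C.
Proof. induction N; [rewrite !sumC_O; auto|rewrite !sumC_S, IHN; ring]. Qed.

Lemma sumC_mult_l (c : C) (f : nat -> C) N : sum_n (fun k => Cmult c (f k)) N = Cmult c (sum_n f N) :> C.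
Proof. induction N; [rewrite !sumC_O; auto|rewrite !sumC_S, IHN; ring]. Qed.

Lemma sumC_mult_r (c : C) (f : nat -> C) N : sum_n (fun k => Cmult (f k) c) N = Cmult (sum_n f N) c :> C.
Proof. induction N; [rewrite !sumC_O; auto|rewrite !sumC_S, IHN; ring]. Qed.

Lemma sumC_conj (f : nat -> C) N : Cconj (sum_n f N) = sum_n (fun k => Cconj (f k)) N :> C.
Proof.
  induction N; [rewrite !sumC_O; auto|rewrite !sumC_S, <- IHN].
  destruct (sum_n f N), (f (S N)); unfold Cconj, Cplus; simpl; f_equal; ring.
Qed.

Lemma sumC_single (f : nat -> C) N k : (k <= N)%nat ->
  (forall i, (i <= N)%nat -> i <> k -> f i = RtoC 0) -> sum_n f N = f k :> C.
Proof.
  induction N; intros Hk H.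
  - assert (k = 0%nat) by lia; subst. apply sumC_O.
  - rewrite sumC_S. destruct (Nat.eq_dec k (S N)) as [->|Hne].
    + rewrite sumC_zero. ring. intros i Hi; apply H; lia.
    + rewrite IHN by (try lia; intros; apply H; lia). rewrite (H (S N)) by lia. ring.
Qed.

Lemma sumC_shift (f : nat -> C) N : sum_n f (S N) = Cplus (f 0%nat) (sum_n (fun k => f (S k)) N) :> C.
Proof.
  induction N.
  - rewrite sumC_S, !sumC_O. reflexivity.
  - rewrite sumC_S, IHN, sumC_S. apply Ceq; simpl; ring.
Qed.

Lemma sumC_rev (f : nat -> C) N : sum_n f N = sum_n (fun k => f (N - k)%nat) N :> C.
Proof.
  induction N as [|N IH].
  - rewrite !sumC_O. reflexivity.
  - rewrite sumC_S, sumC_shift, IH. simpl (S N - 0)%nat.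
    replace (sum_n (fun k => f (S N - S k)%nat) N) with (sum_n (fun k => f (N - k)%nat) N)
      by (apply sumC_ext; intros; reflexivity).
    apply Ceq; simpl; ring.
Qed.

Lemma conj_pow (z : C) k : Cconj (pow_n z k) = pow_n (Cconj z) k.
Proof.
  induction k; simpl.
  - unfold one; simpl. apply Ceq; simpl; ring.
  - change (Cconj (Cmult z (pow_n z k)) = Cmult (Cconj z) (pow_n (Cconj z) k)).
    rewrite Cmult_conj, IHk. reflexivity.
Qed.

Lemma Cmult_reg (x y : C) : x <> RtoC 0 -> Cmult x y = RtoC 0 -> y = RtoC 0.
Proof.
  intros Hx H. replace y with (Cmult (Cinv x) (Cmult x y)).
  - rewrite H. ring.
  - field. exact Hx.
Qed.

Lemma tri (x : nat -> nat -> C) (y : nat -> C) (m : nat) :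
  (forall j, (j <= m)%nat -> x j j <> RtoC 0) ->
  (forall j, (j <= m)%nat -> sum_n (fun i => Cmult (x j i) (y i)) j = (if Nat.eqb j m then RtoC 1 else RtoC 0)) ->
  (forall i, (i < m)%nat -> y i = RtoC 0) /\ y m = Cinv (x m m).
Proof.
  intros Hx H.
  assert (Hlow : forall i, (i < m)%nat -> forall k, (k <= i)%nat -> y k = RtoC 0).
  { induction i as [|i IH]; intros Hi k Hk.
    - assert (k = 0%nat) by lia; subst.
      specialize (H 0%nat ltac:(lia)). rewrite sumC_O in H.
      destruct (Nat.eqb 0 m) eqn:E; [apply Nat.eqb_eq in E; lia|].
      apply (Cmult_reg (x 0%nat 0%nat)); auto. apply Hx; lia.
    - destruct (Nat.eq_dec k (S i)) as [->|Hne]; [|apply IH; lia].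
      specialize (H (S i) ltac:(lia)). rewrite sumC_S in H.
      rewrite sumC_zero in H by (intros k Hk'; rewrite (IH ltac:(lia) k Hk'); ring).
      destruct (Nat.eqb (S i) m) eqn:E; [apply Nat.eqb_eq in E; lia|].
      apply (Cmult_reg (x (S i) (S i))); [apply Hx; lia|].
      rewrite <- H. ring. }
  split; [intros i Hi; apply (Hlow i Hi i); lia|].
  specialize (H m (le_n _)). rewrite Nat.eqb_refl in H.
  destruct m as [|m].
  - rewrite sumC_O in H. assert (Hx0 := Hx 0%nat (le_n _)).
    replace (y 0%nat) with (Cmult (Cinv (x 0%nat 0%nat)) (Cmult (x 0%nat 0%nat) (y 0%nat))) by (field; auto).
    rewrite H. ring.
  - rewrite sumC_S in H.
    rewrite sumC_zero in H by (intros k Hk'; rewrite (Hlow m ltac:(lia) k Hk'); ring).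
    assert (Hxm := Hx (S m) (le_n _)).
    replace (y (S m)) with (Cmult (Cinv (x (S m) (S m))) (Cplus (RtoC 0) (Cmult (x (S m) (S m)) (y (S m))))) by (field; auto).
    rewrite H. ring.
Qed.

Section Moments.
Variables (w : C -> C) (a : nat -> nat -> C).
Hypothesis Hmom : forall m : Z, ex_cint_dm (fun zeta => Cmult (cpowZ zeta m) (w zeta)).
Hypothesis Hlead : forall n, Im (a n n) = 0 /\ 0 < Re (a n n).
Hypothesis Horth : forall m n : nat,
     @is_RInt C_R_NormedModule
       (fun t => Cmult (Cmult (peval (a m) m (eit t)) (Cconj (peval (a n) n (eit t))))
                       (w (eit t)))
       0 (2 * PI) (if Nat.eqb m n then (RtoC 1) else (RtoC 0)).

Definition mom (m : Z) : C :=
  @RInt C_R_CompleteNormedModule (fun t => Cmult (cpowZ (eit t) m) (w (eit t))) 0 (2 * PI).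

Lemma mom_int m : IsInt (fun t => Cmult (cpowZ (eit t) m) (w (eit t))) (mom m).
Proof. unfold IsInt, mom. apply (RInt_correct (V:=C_R_CompleteNormedModule)). apply Hmom. Qed.

Lemma mono_int (j k : nat) :
  IsInt (fun t => Cmult (Cmult (pow_n (eit t) j) (pow_n (Cconj (eit t)) k)) (w (eit t)))
        (mom (Z.of_nat j - Z.of_nat k)).
Proof.
  eapply IsInt_ext; [|apply mom_int]. intros t.
  rewrite cpowZ_nat, cpowZ_cnat, cpowZ_add. reflexivity.
Qed.

Lemma GI1 (c : nat -> C) (N k : nat) :
  IsInt (fun t => Cmult (Cmult (peval c N (eit t)) (pow_n (Cconj (eit t)) k)) (w (eit t)))
        (sum_n (fun j => Cmult (c j) (mom (Z.of_nat j - Z.of_nat k))) N).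
Proof.
  eapply IsInt_ext; [|apply IsInt_sum; intros j _; apply IsInt_mult_l; apply (mono_int j k)].
  intros t. simpl. unfold peval. rewrite <- !sumC_mult_r. apply sumC_ext. intros; ring.
Qed.

Lemma conj_peval (c : nat -> C) N z :
  Cconj (peval c N z) = sum_n (fun j => Cmult (Cconj (c j)) (pow_n (Cconj z) j)) N.
Proof.
  unfold peval. rewrite sumC_conj. apply sumC_ext. intros. rewrite Cmult_conj, conj_pow. reflexivity.
Qed.

Lemma GI2 (c : nat -> C) (N k : nat) :
  IsInt (fun t => Cmult (Cmult (pow_n (eit t) k) (Cconj (peval c N (eit t)))) (w (eit t)))
        (sum_n (fun j => Cmult (Cconj (c j)) (mom (Z.of_nat k - Z.of_nat j))) N).
Proof.
  eapply IsInt_ext; [|apply IsInt_sum; intros j _; apply IsInt_mult_l; apply (mono_int k j)].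
  intros t. simpl. rewrite conj_peval. rewrite <- sumC_mult_l, <- sumC_mult_r. apply sumC_ext. intros; ring.
Qed.

Lemma lead_nz m : a m m <> RtoC 0.
Proof. intros H. destruct (Hlead m) as [_ H2]. rewrite H in H2. simpl in H2. lra. Qed.

Lemma lead_conj m : Cconj (a m m) = a m m.
Proof. destruct (Hlead m) as [H1 _]. unfold Im in H1. destruct (a m m); simpl in *; subst. apply Ceq; simpl; ring. Qed.

Lemma O1 (m k : nat) : (k <= m)%nat ->
  IsInt (fun t => Cmult (Cmult (peval (a m) m (eit t)) (pow_n (Cconj (eit t)) k)) (w (eit t)))
        (if Nat.eqb k m then Cinv (a m m) else RtoC 0).
Proof.
  intros Hk.
  set (y i := sum_n (fun j => Cmult (a m j) (mom (Z.of_nat j - Z.of_nat i))) m).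
  assert (HT := tri (fun j i => Cconj (a j i)) y m).
  destruct HT as [HT1 HT2].
  - intros j _. rewrite lead_conj. apply lead_nz.
  - intros j Hj. apply (IsInt_unique (fun t => Cmult (Cmult (peval (a m) m (eit t)) (Cconj (peval (a j) j (eit t)))) (w (eit t)))).
    + eapply IsInt_ext; [|apply IsInt_sum; intros i _; apply IsInt_mult_l; apply (GI1 (a m) m i)].
      intros t. simpl. rewrite conj_peval. rewrite <- sumC_mult_l, <- sumC_mult_r. apply sumC_ext. intros; ring.
    + rewrite Nat.eqb_sym. apply Horth.
  - eapply IsInt_ext_val; [|apply GI1]. fold (y k).
    destruct (Nat.eqb k m) eqn:E.
    + apply Nat.eqb_eq in E; subst. rewrite HT2, lead_conj. reflexivity.
    + apply Nat.eqb_neq in E. apply HT1. lia.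
Qed.

Lemma O2 (m k : nat) : (k <= m)%nat ->
  IsInt (fun t => Cmult (Cmult (pow_n (eit t) k) (Cconj (peval (a m) m (eit t)))) (w (eit t)))
        (if Nat.eqb k m then Cinv (a m m) else RtoC 0).
Proof.
  intros Hk.
  set (y i := sum_n (fun j => Cmult (Cconj (a m j)) (mom (Z.of_nat i - Z.of_nat j))) m).
  assert (HT := tri (fun j i => a j i) y m).
  destruct HT as [HT1 HT2].
  - intros j _. apply lead_nz.
  - intros j Hj. apply (IsInt_unique (fun t => Cmult (Cmult (peval (a j) j (eit t)) (Cconj (peval (a m) m (eit t)))) (w (eit t)))).
    + eapply IsInt_ext; [|apply IsInt_sum; intros i _; apply IsInt_mult_l; apply (GI2 (a m) m i)].
      intros t. simpl. set (X := Cconj (peval (a m) m (eit t))). unfold peval.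
      rewrite <- !sumC_mult_r. apply sumC_ext. intros; ring.
    + apply Horth.
  - eapply IsInt_ext_val; [|apply GI2]. fold (y k).
    destruct (Nat.eqb k m) eqn:E.
    + apply Nat.eqb_eq in E; subst. rewrite HT2. reflexivity.
    + apply Nat.eqb_neq in E. apply HT1. lia.
Qed.

End Moments.

Lemma powS (x : C) k : pow_n x (S k) = Cmult x (pow_n x k) :> C.
Proof. reflexivity. Qed.
Lemma pow0 (x : C) : pow_n x 0 = RtoC 1 :> C.
Proof. reflexivity. Qed.
Lemma pow_add (x : C) i j : pow_n x (i + j) = Cmult (pow_n x i) (pow_n x j) :> C.
Proof. induction i; [rewrite Nat.add_0_l, pow0; cring|rewrite Nat.add_succ_l, !powS, IHi; cring]. Qed.
Lemma pow_mult (x y : C) i : pow_n (Cmult x y) i = Cmult (pow_n x i) (pow_n y i) :> C.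
Proof. induction i; [rewrite !pow0; cring|rewrite !powS, IHi; cring]. Qed.
Lemma pow_one i : pow_n (RtoC 1) i = RtoC 1 :> C.
Proof. induction i; [reflexivity|rewrite powS, IHi; cring]. Qed.

Definition dq (c : nat -> C) (N i : nat) (y : C) : C :=
  sum_n (fun j => if Nat.ltb i j then Cmult (c j) (pow_n y (j - 1 - i)) else RtoC 0) N.
Definition Qd (c : nat -> C) (N : nat) (x y : C) : C :=
  sum_n (fun i => Cmult (pow_n x i) (dq c N i y)) N.

Lemma geo (x y : C) N : Cmult (Cminus x y) (sum_n (fun i => Cmult (pow_n x i) (pow_n y (N - i))) N)
  = Cminus (pow_n x (S N)) (pow_n y (S N)).
Proof.
  induction N.
  - rewrite sumC_O. replace (0 - 0)%nat with 0%nat by lia. rewrite (powS x 0), (powS y 0), !pow0. cring.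
  - rewrite sumC_S. replace (S N - S N)%nat with 0%nat by lia.
    replace (sum_n (fun i => Cmult (pow_n x i) (pow_n y (S N - i))) N)
      with (Cmult y (sum_n (fun i => Cmult (pow_n x i) (pow_n y (N - i))) N)).
    + rewrite (powS x (S N)), (powS y (S N)), (powS x N), (powS y N), pow0.
      replace (Cmult (Cminus x y) (Cplus (Cmult y (sum_n (fun i => Cmult (pow_n x i) (pow_n y (N - i))) N))
                (Cmult (Cmult x (pow_n x N)) (RtoC 1))))
        with (Cplus (Cmult y (Cmult (Cminus x y) (sum_n (fun i => Cmult (pow_n x i) (pow_n y (N - i))) N)))
               (Cmult (Cminus x y) (Cmult x (pow_n x N)))) by cring.
      rewrite IHN, !powS. cring.
    + rewrite <- sumC_mult_l. apply sumC_ext. intros k Hk.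
      replace (S N - k)%nat with (S (N - k)) by lia. rewrite powS. cring.
Qed.

Lemma dq_S (c : nat -> C) N i y : dq c (S N) i y =
  Cplus (dq c N i y) (if Nat.ltb i (S N) then Cmult (c (S N)) (pow_n y (N - i)) else RtoC 0).
Proof.
  unfold dq. rewrite sumC_S. f_equal. destruct (Nat.ltb i (S N)); auto. do 2 f_equal. lia.
Qed.

Lemma dq_top (c : nat -> C) N i y : (N <= i)%nat -> dq c N i y = RtoC 0.
Proof.
  intros H. unfold dq. apply sumC_zero. intros k Hk.
  destruct (Nat.ltb i k) eqn:E; auto. apply Nat.ltb_lt in E; lia.
Qed.

Lemma DQ (c : nat -> C) N x y :
  Cmult (Cminus x y) (Qd c N x y) = Cminus (peval c N x) (peval c N y).
Proof.
  induction N.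
  - unfold Qd, peval. rewrite !sumC_O. rewrite dq_top by lia. rewrite !pow0. cring.
  - assert (HQ : Qd c (S N) x y = Cplus (Qd c N x y)
        (Cmult (c (S N)) (sum_n (fun i => Cmult (pow_n x i) (pow_n y (N - i))) N))).
    { unfold Qd. rewrite sumC_S. rewrite (dq_top c (S N) (S N)) by lia.
      rewrite <- sumC_mult_l.
      transitivity (sum_n (fun i => Cplus (Cmult (pow_n x i) (dq c N i y))
          (Cmult (c (S N)) (Cmult (pow_n x i) (pow_n y (N - i))))) N).
      + rewrite Cmult_0_r, Cplus_0_r. apply sumC_ext. intros k Hk. rewrite dq_S.
        assert (E : Nat.ltb k (S N) = true) by (apply Nat.ltb_lt; lia). rewrite E. cring.
      + rewrite sumC_plus. reflexivity. }
    rewrite HQ. unfold peval in *. rewrite !sumC_S.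
    replace (Cmult (Cminus x y) (Cplus (Qd c N x y) (Cmult (c (S N)) (sum_n (fun i => Cmult (pow_n x i) (pow_n y (N - i))) N))))
      with (Cplus (Cmult (Cminus x y) (Qd c N x y)) (Cmult (c (S N)) (Cmult (Cminus x y) (sum_n (fun i => Cmult (pow_n x i) (pow_n y (N - i))) N)))) by cring.
    rewrite IHN, geo. cring.
Qed.

Lemma Cconj_invol (z : C) : Cconj (Cconj z) = z.
Proof. destruct z; unfold Cconj; simpl; apply Ceq; simpl; ring. Qed.

Lemma prec_b (c : nat -> C) n x : precip c n x = peval (fun j => Cconj (c (n - j)%nat)) n x.
Proof.
  unfold precip, peval. rewrite sumC_rev. apply sumC_ext. intros k Hk.
  replace (n - (n - k))%nat with k by lia. reflexivity.
Qed.

Lemma zc1 t k : Cmult (pow_n (eit t) k) (pow_n (Cconj (eit t)) k) = RtoC 1.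
Proof. rewrite <- pow_mult, conj_eit, eit_inv. apply pow_one. Qed.

Lemma zc_sub t k n : (k <= n)%nat ->
  Cmult (pow_n (eit t) k) (pow_n (Cconj (eit t)) n) = pow_n (Cconj (eit t)) (n - k).
Proof.
  intros H. replace n with (k + (n - k))%nat at 1 by lia. rewrite pow_add.
  transitivity (Cmult (Cmult (pow_n (eit t) k) (pow_n (Cconj (eit t)) k)) (pow_n (Cconj (eit t)) (n - k))); [cring|].
  rewrite zc1. cring.
Qed.

Lemma conjP_circ (c : nat -> C) n t :
  Cconj (peval c n (eit t)) = Cmult (pow_n (Cconj (eit t)) n) (precip c n (eit t)).
Proof.
  rewrite conj_peval. unfold precip. rewrite <- sumC_mult_l. apply sumC_ext. intros k Hk.
  replace (pow_n (Cconj (eit t)) k) with (Cmult (pow_n (eit t) (n - k)) (pow_n (Cconj (eit t)) n)).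
  - cring.
  - rewrite zc_sub by lia. f_equal. lia.
Qed.

Lemma conjPs_circ (c : nat -> C) n t :
  Cconj (precip c n (eit t)) = Cmult (pow_n (Cconj (eit t)) n) (peval c n (eit t)).
Proof.
  unfold precip, peval. rewrite sumC_conj, <- sumC_mult_l. apply sumC_ext. intros k Hk.
  rewrite Cmult_conj, Cconj_invol, conj_pow.
  rewrite <- (zc_sub t k n) by lia. cring.
Qed.

Lemma Qd_expand (c : nat -> C) N x y X :
  Cmult (Qd c N x y) X = sum_n (fun i => Cmult (pow_n x i)
     (sum_n (fun j => if Nat.ltb i j then Cmult (c j) (Cmult (pow_n y (j - 1 - i)) X) else RtoC 0) N)) N.
Proof.
  unfold Qd, dq. rewrite <- sumC_mult_r. apply sumC_ext. intros i Hi.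
  rewrite <- sumC_mult_l, <- sumC_mult_r, <- sumC_mult_l. apply sumC_ext. intros j Hj.
  destruct (Nat.ltb i j); cring.
Qed.

Lemma Qd_expand2 (c : nat -> C) N x y X :
  Cmult (Qd c N x y) X = sum_n (fun i => Cmult (dq c N i y) (Cmult (pow_n x i) X)) N.
Proof. unfold Qd. rewrite <- sumC_mult_r. apply sumC_ext. intros; cring. Qed.

Lemma Cmult_cancel (x A B : C) : x <> RtoC 0 -> Cmult x A = Cmult x B -> A = B.
Proof.
  intros Hx H. replace A with (Cmult (Cinv x) (Cmult x A)) by (field; auto).
  rewrite H. field; auto.
Qed.

Section Main.
Variables (w : C -> C) (a : nat -> nat -> C) (n : nat) (z : C).
Hypothesis Hn : (1 <= n)%nat.
Hypothesis Hmom : forall m : Z, ex_cint_dm (fun zeta => Cmult (cpowZ zeta m) (w zeta)).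
Hypothesis Hlead : forall n, Im (a n n) = 0 /\ 0 < Re (a n n).
Hypothesis Horth : forall m n : nat,
     @is_RInt C_R_NormedModule
       (fun t => Cmult (Cmult (peval (a m) m (eit t)) (Cconj (peval (a n) n (eit t))))
                       (w (eit t)))
       0 (2 * PI) (if Nat.eqb m n then (RtoC 1) else (RtoC 0)).

Definition bb (j : nat) : C := Cconj (a n (n - j)%nat).
Definition PP (x : C) : C := peval (a n) n x.
Definition Ps (x : C) : C := precip (a n) n x.
Definition MM (x y : C) : C := Cminus (Cmult (Qd (a n) n x y) (Ps y)) (Cmult (Qd bb n x y) (PP y)).
Definition TT (t : R) : C := Cmult (pow_n (Cconj (eit t)) (n - 1)) (MM z (eit t)).

Lemma Ps_b x : Ps x = peval bb n x.
Proof. unfold Ps, bb. apply prec_b. Qed.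

Lemma MN x y : Cmult (Cminus x y) (MM x y) = Cminus (Cmult (PP x) (Ps y)) (Cmult (Ps x) (PP y)).
Proof.
  unfold MM.
  transitivity (Cminus (Cmult (Cmult (Cminus x y) (Qd (a n) n x y)) (Ps y))
                       (Cmult (Cmult (Cminus x y) (Qd bb n x y)) (PP y))); [cring|].
  rewrite !DQ. rewrite <- !Ps_b. unfold PP. cring.
Qed.

Lemma MM_swap y : MM z y = Cminus (Cmult (Qd (a n) n y z) (Ps z)) (Cmult (Qd bb n y z) (PP z)).
Proof.
  destruct (Ceq_dec y z) as [->|Hne]; [reflexivity|].
  assert (Hz : Cminus z y <> RtoC 0).
  { intros H. apply Hne. replace y with (Cminus z (Cminus z y)) by cring. rewrite H. cring. }
  apply (Cmult_cancel (Cminus z y)); auto.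
  rewrite MN.
  transitivity (Copp (Cminus (Cmult (Cmult (Cminus y z) (Qd (a n) n y z)) (Ps z))
                       (Cmult (Cmult (Cminus y z) (Qd bb n y z)) (PP z)))); [|cring].
  rewrite !DQ. rewrite <- !Ps_b. unfold PP. cring.
Qed.
Lemma zcz t : Cmult (eit t) (Cconj (eit t)) = RtoC 1.
Proof. rewrite conj_eit. apply eit_inv. Qed.

Lemma TT_zform t : Cmult (TT t) (w (eit t)) =
  sum_n (fun i => Cmult (pow_n z i) (sum_n (fun j => if Nat.ltb i j then
     Cminus (Cmult (a n j) (Cmult (Cmult (pow_n (eit t) (j - i)) (Cconj (PP (eit t)))) (w (eit t))))
            (Cmult (bb j) (Cmult (Cmult (PP (eit t)) (pow_n (Cconj (eit t)) (n - (j - i)))) (w (eit t))))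
     else RtoC 0) n)) n.
Proof.
  unfold TT, MM. set (zt := eit t). set (cz := Cconj zt).
  transitivity (Cminus (Cmult (Qd (a n) n z zt) (Cmult (Cmult (pow_n cz (n - 1)) (Ps zt)) (w zt)))
                       (Cmult (Qd bb n z zt) (Cmult (Cmult (pow_n cz (n - 1)) (PP zt)) (w zt)))); [cring|].
  rewrite !Qd_expand, <- sumC_minus. apply sumC_ext. intros i Hi.
  rewrite <- sumC_mult_l, <- sumC_mult_l, <- sumC_minus, <- sumC_mult_l. apply sumC_ext. intros j Hj.
  destruct (Nat.ltb i j) eqn:E; [|cring]. apply Nat.ltb_lt in E.
  assert (E1 : pow_n zt (j - i) = Cmult zt (pow_n zt (j - 1 - i))) by (rewrite <- powS; f_equal; lia).
  assert (E2 : pow_n cz n = Cmult cz (pow_n cz (n - 1))) by (rewrite <- powS; f_equal; lia).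
  assert (E3 : Cmult (pow_n zt (j - 1 - i)) (pow_n cz (n - 1)) = pow_n cz (n - (j - i))).
  { unfold zt, cz. rewrite zc_sub by lia. f_equal. lia. }
  assert (E4 : Cconj (PP zt) = Cmult (pow_n cz n) (Ps zt)) by (unfold PP, Ps, zt, cz; apply conjP_circ).
  assert (E5 : Cmult zt cz = RtoC 1) by apply zcz.
  rewrite E4, E1, E2, <- E3.
  transitivity (Cminus (Cmult (pow_n z i) (Cmult (a n j) (Cmult (Cmult zt cz) (Cmult (Cmult (Cmult (pow_n zt (j - 1 - i)) (pow_n cz (n - 1))) (Ps zt)) (w zt)))))
     (Cmult (pow_n z i) (Cmult (bb j) (Cmult (Cmult (PP zt) (Cmult (pow_n zt (j - 1 - i)) (pow_n cz (n - 1)))) (w zt)))));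
    [rewrite E5; cring|cring].
Qed.

Definition vO (k : nat) : C := if Nat.eqb k n then Cinv (a n n) else RtoC 0.

Lemma O1n k : (k <= n)%nat -> IsInt (fun t => Cmult (Cmult (PP (eit t)) (pow_n (Cconj (eit t)) k)) (w (eit t))) (vO k).
Proof. intros Hk. exact (O1 w a Hmom Hlead Horth n k Hk). Qed.
Lemma O2n k : (k <= n)%nat -> IsInt (fun t => Cmult (Cmult (pow_n (eit t) k) (Cconj (PP (eit t)))) (w (eit t))) (vO k).
Proof. intros Hk. exact (O2 w a Hmom Hlead Horth n k Hk). Qed.

Lemma knz : a n n <> RtoC 0.
Proof. exact (lead_nz a Hlead n). Qed.

Lemma Int_T : IsInt (fun t => Cmult (TT t) (w (eit t))) (RtoC 1).
Proof.
  eapply IsInt_ext; [intros t; symmetry; apply TT_zform|].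
  eapply IsInt_ext_val; [|apply IsInt_sum; intros i Hi; apply IsInt_mult_l;
     apply IsInt_sum with (l := fun j => if Nat.ltb i j then
        Cminus (Cmult (a n j) (vO (j - i))) (Cmult (bb j) (vO (n - (j - i)))) else RtoC 0); intros j Hj;
     destruct (Nat.ltb i j) eqn:E;
     [apply IsInt_minus; apply IsInt_mult_l; [apply O2n|apply O1n]; apply Nat.ltb_lt in E; lia
     |apply IsInt_zero]].
  rewrite (sumC_single _ n 0).
  2: lia.
  2: { intros i Hi Hi0.
    rewrite sumC_zero; [cring|]. intros j Hj. destruct (Nat.ltb i j) eqn:E; [|reflexivity].
    apply Nat.ltb_lt in E. unfold vO.
    destruct (Nat.eqb (j - i) n) eqn:E1; [apply Nat.eqb_eq in E1; lia|].
    destruct (Nat.eqb (n - (j - i)) n) eqn:E2; [apply Nat.eqb_eq in E2; lia|]. cring. }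
  rewrite (sumC_single _ n n).
  2: lia.
  2: { intros j Hj Hjn.
    destruct (Nat.ltb 0 j) eqn:E; [|reflexivity].
    apply Nat.ltb_lt in E. unfold vO.
    destruct (Nat.eqb (j - 0) n) eqn:E1; [apply Nat.eqb_eq in E1; lia|].
    destruct (Nat.eqb (n - (j - 0)) n) eqn:E2; [apply Nat.eqb_eq in E2; lia|]. cring. }
  assert (E : Nat.ltb 0 n = true) by (apply Nat.ltb_lt; lia). rewrite E.
  unfold vO. rewrite Nat.sub_0_r, Nat.eqb_refl, Nat.sub_diag.
  destruct (Nat.eqb 0 n) eqn:E2; [apply Nat.eqb_eq in E2; lia|].
  rewrite pow0. pose proof knz. field. auto.
Qed.

Lemma R_form (c : nat -> C) t :
  Cmult (Cmult (peval c (n - 1) (eit t)) (TT t)) (w (eit t)) =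
  Cplus (Cmult (peval c (n - 1) z) (Cmult (TT t) (w (eit t))))
   (Cminus (Cmult (Ps z) (sum_n (fun i => Cmult (dq c (n - 1) i z)
              (Cmult (Cmult (PP (eit t)) (pow_n (Cconj (eit t)) (n - 1 - i))) (w (eit t)))) (n - 1)))
           (Cmult (PP z) (sum_n (fun i => Cmult (dq c (n - 1) i z)
              (Cmult (Cmult (pow_n (eit t) (S i)) (Cconj (PP (eit t)))) (w (eit t)))) (n - 1)))).
Proof.
  assert (H1 : peval c (n - 1) (eit t) = Cplus (peval c (n - 1) z) (Cmult (Cminus (eit t) z) (Qd c (n - 1) (eit t) z))).
  { rewrite DQ. cring. }
  assert (H2 : Cmult (Cminus (eit t) z) (TT t) =
     Copp (Cmult (pow_n (Cconj (eit t)) (n - 1)) (Cminus (Cmult (PP z) (Ps (eit t))) (Cmult (Ps z) (PP (eit t)))))).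
  { unfold TT. rewrite <- MN. cring. }
  rewrite H1.
  transitivity (Cplus (Cmult (peval c (n - 1) z) (Cmult (TT t) (w (eit t))))
     (Cmult (Qd c (n - 1) (eit t) z) (Cmult (Cmult (Cminus (eit t) z) (TT t)) (w (eit t))))); [cring|].
  rewrite H2. f_equal.
  transitivity (Cminus (Cmult (Ps z) (Cmult (Qd c (n - 1) (eit t) z) (Cmult (Cmult (pow_n (Cconj (eit t)) (n - 1)) (PP (eit t))) (w (eit t)))))
                       (Cmult (PP z) (Cmult (Qd c (n - 1) (eit t) z) (Cmult (Cmult (pow_n (Cconj (eit t)) (n - 1)) (Ps (eit t))) (w (eit t)))))); [cring|].
  rewrite !Qd_expand2. f_equal; f_equal; apply sumC_ext; intros i Hi; f_equal.
  - transitivity (Cmult (Cmult (PP (eit t)) (Cmult (pow_n (eit t) i) (pow_n (Cconj (eit t)) (n - 1)))) (w (eit t))); [cring|].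
    rewrite zc_sub by lia. reflexivity.
  - assert (E4 : Cconj (PP (eit t)) = Cmult (pow_n (Cconj (eit t)) n) (Ps (eit t))) by (unfold PP, Ps; apply conjP_circ).
    assert (E2 : pow_n (Cconj (eit t)) n = Cmult (Cconj (eit t)) (pow_n (Cconj (eit t)) (n - 1))) by (rewrite <- powS; f_equal; lia).
    rewrite E4, E2, powS.
    transitivity (Cmult (Cmult (Cmult (eit t) (Cconj (eit t))) (Cmult (pow_n (eit t) i) (Cmult (pow_n (Cconj (eit t)) (n - 1)) (Ps (eit t))))) (w (eit t)));
      [rewrite zcz; cring|cring].
Qed.

Lemma Int_R (c : nat -> C) :
  IsInt (fun t => Cmult (Cmult (peval c (n - 1) (eit t)) (TT t)) (w (eit t))) (peval c (n - 1) z).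
Proof.
  eapply IsInt_ext; [intros t; symmetry; apply R_form|].
  eapply IsInt_ext_val; [|apply IsInt_plus; [apply IsInt_mult_l; apply Int_T|];
     apply IsInt_minus; apply IsInt_mult_l; apply IsInt_sum; intros i Hi; apply IsInt_mult_l;
     [apply O1n|apply O2n]; lia].
  rewrite (sumC_zero (fun i => Cmult (dq c (n - 1) i z) (vO (n - 1 - i)))).
  2: { intros i Hi. unfold vO. destruct (Nat.eqb (n - 1 - i) n) eqn:E; [apply Nat.eqb_eq in E; lia|]. cring. }
  rewrite (sumC_zero (fun i => Cmult (dq c (n - 1) i z) (vO (S i)))).
  2: { intros i Hi. unfold vO. destruct (Nat.eqb (S i) n) eqn:E; [|cring].
       apply Nat.eqb_eq in E. rewrite dq_top by lia. cring. }
  cring.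
Qed.

Definition mc (i : nat) : C := Cminus (Cmult (dq (a n) n i z) (Ps z)) (Cmult (dq bb n i z) (PP z)).

Lemma T_zeta t : TT t = sum_n (fun i => Cmult (mc i) (pow_n (Cconj (eit t)) (n - 1 - i))) (n - 1).
Proof.
  unfold TT. rewrite MM_swap. unfold Qd.
  transitivity (sum_n (fun i => Cmult (mc i) (Cmult (pow_n (eit t) i) (pow_n (Cconj (eit t)) (n - 1)))) n).
  - rewrite <- sumC_mult_r, <- sumC_mult_r, <- sumC_minus, <- sumC_mult_l. apply sumC_ext. intros i Hi.
    unfold mc. cring.
  - replace n with (S (n - 1)) at 1 by lia. rewrite sumC_S.
    replace (mc (S (n - 1))) with (RtoC 0).
    2: { unfold mc. replace (S (n - 1)) with n by lia. rewrite !dq_top by lia. cring. }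
    transitivity (Cplus (sum_n (fun i => Cmult (mc i) (pow_n (Cconj (eit t)) (n - 1 - i))) (n - 1)) (RtoC 0)); [|cring].
    f_equal; [|cring]. apply sumC_ext. intros i Hi. rewrite zc_sub by lia. reflexivity.
Qed.

Lemma T_mult F t : Cmult (Cmult (F t) (TT t)) (w (eit t)) =
  sum_n (fun i => Cmult (mc i) (Cmult (Cmult (F t) (pow_n (Cconj (eit t)) (n - 1 - i))) (w (eit t)))) (n - 1).
Proof.
  rewrite T_zeta. rewrite <- sumC_mult_l, <- sumC_mult_r. apply sumC_ext. intros; cring.
Qed.

Lemma Int_PT : IsInt (fun t => Cmult (Cmult (PP (eit t)) (TT t)) (w (eit t))) (RtoC 0).
Proof.
  eapply IsInt_ext; [intros t; symmetry; apply (T_mult (fun t => PP (eit t)))|].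
  eapply IsInt_ext_val; [|apply IsInt_sum; intros i Hi; apply IsInt_mult_l; apply O1n; lia].
  apply sumC_zero. intros i Hi. unfold vO. destruct (Nat.eqb (n - 1 - i) n) eqn:E; [apply Nat.eqb_eq in E; lia|]. cring.
Qed.

Lemma mc0 : mc 0 = Cmult (a (n - 1)%nat (n - 1)%nat) (peval (a (n - 1)%nat) (n - 1) z).
Proof.
  assert (H1 := Int_R (a (n - 1)%nat)).
  assert (H2 : IsInt (fun t => Cmult (Cmult (peval (a (n - 1)%nat) (n - 1) (eit t)) (TT t)) (w (eit t)))
                 (Cmult (mc 0) (Cinv (a (n - 1)%nat (n - 1)%nat)))).
  { eapply IsInt_ext; [intros t; symmetry; apply (T_mult (fun t => peval (a (n - 1)%nat) (n - 1) (eit t)))|].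
    eapply IsInt_ext_val; [|apply IsInt_sum; intros i Hi; apply IsInt_mult_l;
       apply (O1 w a Hmom Hlead Horth (n - 1) (n - 1 - i)); lia].
    rewrite (sumC_single _ (n - 1) 0).
    - rewrite Nat.sub_0_r, Nat.eqb_refl. reflexivity.
    - lia.
    - intros i Hi Hi0. destruct (Nat.eqb (n - 1 - i) (n - 1)) eqn:E; [apply Nat.eqb_eq in E; lia|]. cring. }
  pose proof (IsInt_unique _ _ _ H1 H2) as E.
  rewrite E. pose proof (lead_nz a Hlead (n - 1)). field. auto.
Qed.

Variables (v dv : C -> C).
Hypothesis Hwv : forall t, w (eit t) = cexp (Copp (v (eit t))).
Hypothesis Hdv : forall t, @is_derive C_AbsRing C_NormedModule v (eit t) (dv (eit t)).
Hypothesis Hint : forall m : Z, ex_cint_dm (fun zeta =>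
       Cmult (Cmult (Cdiv (Cminus (dv z) (dv zeta)) (Cminus z zeta)) (cpowZ zeta m)) (w zeta)).

Definition Kf (y : C) : C := Cdiv (Cminus (dv z) (dv y)) (Cminus z y).

Lemma Kmul y : Cmult (Kf y) (Cminus z y) = Cminus (dv z) (dv y).
Proof.
  unfold Kf. destruct (Ceq_dec y z) as [->|Hne].
  - replace (Cminus z z) with (RtoC 0) by cring. rewrite Cmult_0_r. cring.
  - field. intros H. apply Hne. replace y with (Cminus z (Cminus z y)) by cring. rewrite H. cring.
Qed.

Definition kmom (m : Z) : C :=
  @RInt C_R_CompleteNormedModule (fun t => Cmult (Cmult (Kf (eit t)) (cpowZ (eit t) m)) (w (eit t))) 0 (2 * PI).

Lemma kmom_int m : IsInt (fun t => Cmult (Cmult (Kf (eit t)) (cpowZ (eit t) m)) (w (eit t))) (kmom m).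
Proof. unfold IsInt, kmom. apply (RInt_correct (V:=C_R_CompleteNormedModule)). apply Hint. Qed.

Lemma dv_int m : IsInt (fun t => Cmult (Cmult (dv (eit t)) (cpowZ (eit t) m)) (w (eit t)))
  (Cminus (Cmult (dv z) (mom w m)) (Cminus (Cmult z (kmom m)) (kmom (m + 1)))).
Proof.
  eapply IsInt_ext; [|apply IsInt_minus; [apply IsInt_mult_l; apply mom_int; exact Hmom|
     apply IsInt_minus; [apply IsInt_mult_l; apply kmom_int|apply kmom_int]]].
  intros t. simpl. rewrite cpowZ_succ.
  transitivity (Cminus (Cmult (dv z) (Cmult (cpowZ (eit t) m) (w (eit t))))
                       (Cmult (Cmult (Kf (eit t)) (Cminus z (eit t))) (Cmult (cpowZ (eit t) m) (w (eit t))))); [cring|].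
  rewrite Kmul. cring.
Qed.

Lemma dv_mono (j k : nat) :
  IsInt (fun t => Cmult (Cmult (dv (eit t)) (Cmult (pow_n (eit t) j) (pow_n (Cconj (eit t)) k))) (w (eit t)))
        (Cmult (RtoC (IZR (Z.of_nat j - Z.of_nat k - 1))) (mom w (Z.of_nat j - Z.of_nat k - 1))).
Proof.
  set (m := (Z.of_nat j - Z.of_nat k - 1)%Z).
  assert (Hd := dv_int (m + 1)).
  rewrite <- (IBP_mono w v dv Hwv Hdv m (mom w m) _ (mom_int w Hmom m) Hd).
  eapply IsInt_ext; [|exact Hd]. intros t. simpl.
  rewrite cpowZ_nat, cpowZ_cnat, cpowZ_add. unfold m. do 3 f_equal. lia.
Qed.

Definition G1 (c : nat -> C) (N k : nat) : C := sum_n (fun j => Cmult (c j) (mom w (Z.of_nat j - Z.of_nat k))) N.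
Definition dP (j : nat) : C := Cmult (RtoC (INR (S j))) (a n (S j)).

Lemma IBP_poly k :
  IsInt (fun t => Cmult (Cmult (dv (eit t)) (Cmult (PP (eit t)) (pow_n (Cconj (eit t)) k))) (w (eit t)))
        (Cminus (G1 dP (n - 1) k) (Cmult (RtoC (INR (S k))) (G1 (a n) n (S k)))).
Proof.
  eapply IsInt_ext_val; [|eapply IsInt_ext; [|apply IsInt_sum; intros j Hj; apply (IsInt_mult_l (a n j)); apply (dv_mono j k)]].
  2: { intros t. simpl. unfold PP, peval. rewrite <- sumC_mult_r, <- sumC_mult_l, <- sumC_mult_r.
       apply sumC_ext. intros; cring. }
  unfold G1.
  transitivity (Cminus (sum_n (fun j => Cmult (Cmult (a n j) (RtoC (INR j))) (mom w (Z.of_nat j - Z.of_nat k - 1))) n)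
                       (Cmult (RtoC (INR (S k))) (sum_n (fun j => Cmult (a n j) (mom w (Z.of_nat j - Z.of_nat (S k)))) n))).
  - rewrite <- sumC_mult_l, <- sumC_minus. apply sumC_ext. intros j Hj.
    replace (Z.of_nat j - Z.of_nat (S k))%Z with (Z.of_nat j - Z.of_nat k - 1)%Z by lia.
    replace (IZR (Z.of_nat j - Z.of_nat k - 1)) with (INR j - INR (S k)).
    + unfold RtoC. apply Ceq; simpl; ring.
    + rewrite !minus_IZR, <- !INR_IZR_INZ, S_INR. simpl. ring.
  - f_equal. replace n with (S (n - 1)) at 1 by lia. rewrite sumC_shift.
    replace (Cmult (Cmult (a n 0%nat) (RtoC (INR 0))) (mom w (Z.of_nat 0 - Z.of_nat k - 1))) with (RtoC 0)
      by (simpl; cring).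
    transitivity (sum_n (fun j => Cmult (Cmult (a n (S j)) (RtoC (INR (S j)))) (mom w (Z.of_nat (S j) - Z.of_nat k - 1))) (n - 1)); [cring|].
    apply sumC_ext. intros j Hj. unfold dP.
    replace (Z.of_nat (S j) - Z.of_nat k - 1)%Z with (Z.of_nat j - Z.of_nat k)%Z by lia. cring.
Qed.

Lemma G1_vO k : (k <= n)%nat -> G1 (a n) n k = vO k.
Proof.
  intros Hk. apply (IsInt_unique (fun t => Cmult (Cmult (PP (eit t)) (pow_n (Cconj (eit t)) k)) (w (eit t)))).
  - apply (GI1 w Hmom (a n) n k).
  - apply O1n; auto.
Qed.

Lemma G1_R : sum_n (fun i => Cmult (mc i) (G1 dP (n - 1) (n - 1 - i))) (n - 1) = peval dP (n - 1) z.
Proof.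
  apply (IsInt_unique (fun t => Cmult (Cmult (peval dP (n - 1) (eit t)) (TT t)) (w (eit t)))); [|apply Int_R].
  eapply IsInt_ext; [intros t; symmetry; apply (T_mult (fun t => peval dP (n - 1) (eit t)))|].
  apply IsInt_sum. intros i Hi. apply IsInt_mult_l. apply (GI1 w Hmom dP (n - 1) (n - 1 - i)).
Qed.

Lemma Int_b : IsInt (fun t => Cmult (Cmult (dv (eit t)) (Cmult (PP (eit t)) (TT t))) (w (eit t)))
  (Cminus (peval dP (n - 1) z) (Cmult (RtoC (INR n)) (Cmult (mc 0) (Cinv (a n n))))).
Proof.
  apply (IsInt_ext (fun t => sum_n (fun i => Cmult (mc i) (Cmult (Cmult (dv (eit t)) (Cmult (PP (eit t)) (pow_n (Cconj (eit t)) (n - 1 - i)))) (w (eit t)))) (n - 1))).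
  { intros t. symmetry.
    transitivity (Cmult (dv (eit t)) (Cmult (Cmult (PP (eit t)) (TT t)) (w (eit t)))); [cring|].
    rewrite (T_mult (fun t => PP (eit t))). rewrite <- sumC_mult_l. apply sumC_ext. intros i Hi.
    cring. }
  eapply IsInt_ext_val; [|apply IsInt_sum; intros i Hi; apply IsInt_mult_l; apply IBP_poly].
  transitivity (Cminus (sum_n (fun i => Cmult (mc i) (G1 dP (n - 1) (n - 1 - i))) (n - 1))
                       (sum_n (fun i => Cmult (mc i) (Cmult (RtoC (INR (S (n - 1 - i)))) (G1 (a n) n (S (n - 1 - i))))) (n - 1))).
  - rewrite <- sumC_minus. apply sumC_ext. intros; cring.
  - rewrite G1_R. f_equal.
    rewrite (sumC_single _ (n - 1) 0).
    + rewrite G1_vO by lia. unfold vO. replace (S (n - 1 - 0)) with n by lia. rewrite Nat.eqb_refl.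
      cring.
    + lia.
    + intros i Hi Hi0. rewrite G1_vO by lia. unfold vO.
      destruct (Nat.eqb (S (n - 1 - i)) n) eqn:E; [apply Nat.eqb_eq in E; lia|]. cring.
Qed.

Lemma KI (c1 c2 : nat -> C) N1 N2 (s : Z) : exists l,
  IsInt (fun t => Cmult (Cmult (Kf (eit t)) (Cmult (Cmult (peval c1 N1 (eit t)) (peval c2 N2 (eit t))) (cpowZ (eit t) s))) (w (eit t))) l.
Proof.
  eexists.
  apply (IsInt_ext (fun t => sum_n (fun j => Cmult (c1 j) (sum_n (fun k => Cmult (c2 k)
      (Cmult (Cmult (Kf (eit t)) (cpowZ (eit t) (Z.of_nat j + Z.of_nat k + s))) (w (eit t)))) N2)) N1)).
  - intros t. unfold peval.
    set (S2 := sum_n (fun k => Cmult (c2 k) (pow_n (eit t) k)) N2).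
    transitivity (Cmult (sum_n (fun j => Cmult (c1 j) (pow_n (eit t) j)) N1)
       (Cmult S2 (Cmult (Cmult (Kf (eit t)) (cpowZ (eit t) s)) (w (eit t))))); [|cring].
    rewrite <- sumC_mult_r. apply sumC_ext. intros j Hj.
    transitivity (Cmult (c1 j) (Cmult S2 (Cmult (Cmult (Kf (eit t)) (Cmult (pow_n (eit t) j) (cpowZ (eit t) s))) (w (eit t))))); [|cring].
    f_equal. unfold S2. rewrite <- sumC_mult_r. apply sumC_ext. intros k Hk.
    rewrite !cpowZ_nat.
    replace (cpowZ (eit t) (Z.of_nat j + Z.of_nat k + s))
      with (Cmult (Cmult (cpowZ (eit t) (Z.of_nat j)) (cpowZ (eit t) (Z.of_nat k))) (cpowZ (eit t) s))
      by (rewrite !cpowZ_add; reflexivity).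
    cring.
  - apply IsInt_sum. intros j Hj. apply IsInt_mult_l. apply IsInt_sum. intros k Hk. apply IsInt_mult_l.
    apply kmom_int.
Qed.

Lemma cpow1n t : Cmult (eit t) (pow_n (Cconj (eit t)) n) = cpowZ (eit t) (1 - Z.of_nat n).
Proof.
  rewrite cpowZ_cnat. replace (1 - Z.of_nat n)%Z with (1 + - Z.of_nat n)%Z by lia.
  rewrite <- (cpowZ_add t 1). f_equal. change (eit t = Cmult (eit t) (RtoC 1)). cring.
Qed.

Lemma final_value :
  Cplus (Cminus (Cmult (Cmult (RtoC (INR n)) (Cdiv (a (n - 1)%nat (n - 1)%nat) (a n n))) (peval (a (n - 1)%nat) (n - 1) z))
      (Cmult (Cmult Ci (precip (a n) n z))
          (cint_dz (fun zeta => Cmult (Cmult (Cdiv (Cminus (dv z) (dv zeta)) (Cminus z zeta))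
                          (Cmult (peval (a n) n zeta) (Cconj (precip (a n) n zeta)))) (w zeta)))))
    (Cmult (Cmult Ci (peval (a n) n z))
        (cint_dz (fun zeta => Cmult (Cmult (Cdiv (Cminus (dv z) (dv zeta)) (Cminus z zeta))
                        (Cmult (peval (a n) n zeta) (Cconj (peval (a n) n zeta)))) (w zeta))))
  = peval dP (n - 1) z.
Proof.
  set (Xint t := Cmult (Cmult (Cmult (Kf (eit t)) (Cmult (PP (eit t)) (Cconj (Ps (eit t))))) (w (eit t))) (Cmult Ci (eit t))).
  set (Yint t := Cmult (Cmult (Cmult (Kf (eit t)) (Cmult (PP (eit t)) (Cconj (PP (eit t))))) (w (eit t))) (Cmult Ci (eit t))).
  assert (HX : exists l, IsInt Xint l).
  { destruct (KI (a n) (a n) n n (1 - Z.of_nat n)) as [l Hl]. exists (Cmult Ci l).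
    eapply IsInt_ext; [|apply IsInt_mult_l; exact Hl]. intros t. unfold Xint, Ps, PP.
    rewrite conjPs_circ. rewrite <- cpow1n. cring. }
  assert (HY : exists l, IsInt Yint l).
  { destruct (KI (a n) bb n n (1 - Z.of_nat n)) as [l Hl]. exists (Cmult Ci l).
    eapply IsInt_ext; [|apply IsInt_mult_l; exact Hl]. intros t. unfold Yint, PP.
    rewrite conjP_circ. rewrite <- cpow1n. fold (Ps (eit t)). rewrite Ps_b. cring. }
  destruct HX as [lX HX]. destruct HY as [lY HY].
  assert (EX : cint_dz (fun zeta => Cmult (Cmult (Cdiv (Cminus (dv z) (dv zeta)) (Cminus z zeta))
                          (Cmult (peval (a n) n zeta) (Cconj (precip (a n) n zeta)))) (w zeta)) = lX).
  { unfold cint_dz. apply (is_RInt_unique (V:=C_R_CompleteNormedModule)). exact HX. }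
  assert (EY : cint_dz (fun zeta => Cmult (Cmult (Cdiv (Cminus (dv z) (dv zeta)) (Cminus z zeta))
                          (Cmult (peval (a n) n zeta) (Cconj (peval (a n) n zeta)))) (w zeta)) = lY).
  { unfold cint_dz. apply (is_RInt_unique (V:=C_R_CompleteNormedModule)). exact HY. }
  rewrite EX, EY.
  assert (HC : IsInt (fun t => Cminus (Cmult (Cmult Ci (PP z)) (Yint t)) (Cmult (Cmult Ci (Ps z)) (Xint t)))
                     (Cminus (Cmult (Cmult Ci (PP z)) lY) (Cmult (Cmult Ci (Ps z)) lX))).
  { apply IsInt_minus; apply IsInt_mult_l; auto. }
  assert (HD : IsInt (fun t => Cminus (Cmult (Cmult Ci (PP z)) (Yint t)) (Cmult (Cmult Ci (Ps z)) (Xint t)))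
     (Cminus (Cminus (peval dP (n - 1) z) (Cmult (RtoC (INR n)) (Cmult (mc 0) (Cinv (a n n))))) (Cmult (dv z) (RtoC 0)))).
  { eapply IsInt_ext; [|apply IsInt_minus; [apply Int_b|apply IsInt_mult_l; apply Int_PT]].
    intros t. unfold Xint, Yint.
    assert (E4 : Cconj (PP (eit t)) = Cmult (pow_n (Cconj (eit t)) n) (Ps (eit t))) by apply conjP_circ.
    assert (E5 : Cconj (Ps (eit t)) = Cmult (pow_n (Cconj (eit t)) n) (PP (eit t))) by apply conjPs_circ.
    rewrite E4, E5.
    assert (E2 : pow_n (Cconj (eit t)) n = Cmult (Cconj (eit t)) (pow_n (Cconj (eit t)) (n - 1))) by (rewrite <- powS; f_equal; lia).
    assert (HM := MN z (eit t)).
    assert (HK := Kmul (eit t)).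
    unfold TT. rewrite E2.
    transitivity (Copp (Cmult (Cmult (Cmult (Kf (eit t)) (Cminus z (eit t))) (MM z (eit t)))
       (Cmult (Cmult (Cmult (eit t) (Cconj (eit t))) (pow_n (Cconj (eit t)) (n - 1))) (Cmult (PP (eit t)) (w (eit t)))))).
    - rewrite zcz, HK. cring.
    - transitivity (Copp (Cmult (Kf (eit t)) (Cmult (Cmult (Cminus z (eit t)) (MM z (eit t)))
       (Cmult (Cmult (Cmult (eit t) (Cconj (eit t))) (pow_n (Cconj (eit t)) (n - 1))) (Cmult (PP (eit t)) (w (eit t))))))); [cring|].
      rewrite HM. unfold Ci. apply Ceq; simpl; ring. }
  pose proof (IsInt_unique _ _ _ HC HD) as E.
  rewrite mc0 in E.
  pose proof (lead_nz a Hlead n) as Hk.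
  replace (Cplus (Cminus (Cmult (Cmult (RtoC (INR n)) (Cdiv (a (n - 1)%nat (n - 1)%nat) (a n n))) (peval (a (n - 1)%nat) (n - 1) z))
             (Cmult (Cmult Ci (precip (a n) n z)) lX)) (Cmult (Cmult Ci (peval (a n) n z)) lY))
    with (Cplus (Cmult (Cmult (RtoC (INR n)) (Cdiv (a (n - 1)%nat (n - 1)%nat) (a n n))) (peval (a (n - 1)%nat) (n - 1) z))
                (Cminus (Cmult (Cmult Ci (PP z)) lY) (Cmult (Cmult Ci (Ps z)) lX))) by (unfold PP, Ps; cring).
  rewrite E. field. exact Hk.
Qed.

End Main.

Lemma nat_to_ring_C k : @nat_to_ring C_Ring k = RtoC (INR k).
Proof.
  induction k.
  - rewrite nat_to_ring_O. reflexivity.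
  - rewrite nat_to_ring_Sn, IHk, S_INR. change (Cplus (RtoC (INR k)) (RtoC 1) = RtoC (INR k + 1)).
    apply Ceq; simpl; ring.
Qed.

Lemma bridge (f : C -> C) (x l : C) :
  @is_derive C_AbsRing (AbsRing_NormedModule C_AbsRing) f x l ->
  @is_derive C_AbsRing C_NormedModule f x l.
Proof.
  intros [H1 H2]. split.
  - apply is_linear_scal_l.
  - intros y Hy eps. specialize (H2 y Hy eps). exact H2.
Qed.

Lemma deriv_mono (c : C) (k : nat) (z : C) :
  @is_derive C_AbsRing C_NormedModule (fun y => Cmult c (pow_n y k)) z
     (Cmult c (Cmult (RtoC (INR k)) (pow_n z (pred k)))).
Proof.
  apply bridge.
  assert (H1 : @is_derive C_AbsRing (AbsRing_NormedModule C_AbsRing) (fun y => pow_n y k) z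
                 (mult (nat_to_ring k) (pow_n z (pred k)))).
  { pose proof (filterdiff_pow_n (K:=C_AbsRing) z k ltac:(intros; apply Cmult_comm)) as Hp. exact Hp. }
  assert (H0 : @is_derive C_AbsRing (AbsRing_NormedModule C_AbsRing) (fun _ => c) z zero) by apply is_derive_const.
  pose proof (@is_derive_mult C_AbsRing (fun _ => c) (fun y => pow_n y k) z _ _ H0 H1 ltac:(intros; apply Cmult_comm)) as H.
  rewrite nat_to_ring_C in H.
  replace (Cmult c (Cmult (RtoC (INR k)) (pow_n z (pred k))))
    with (plus (mult zero (pow_n z k)) (mult c (mult (RtoC (INR k)) (pow_n z (pred k))))).
  - exact H.
  - change (Cplus (Cmult (RtoC 0) (pow_n z k)) (Cmult c (Cmult (RtoC (INR k)) (pow_n z (pred k))))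
            = Cmult c (Cmult (RtoC (INR k)) (pow_n z (pred k)))). cring.
Qed.

Lemma deriv_peval (c : nat -> C) (N : nat) (z : C) : (1 <= N)%nat ->
  @is_derive C_AbsRing C_NormedModule (peval c N) z
    (peval (fun j => Cmult (RtoC (INR (S j))) (c (S j))) (N - 1) z).
Proof.
  intros HN.
  pose proof (@is_derive_sum_n C_AbsRing C_NormedModule (fun k y => Cmult (c k) (pow_n y k)) N z
      (fun k => Cmult (c k) (Cmult (RtoC (INR k)) (pow_n z (pred k)))) (fun k _ => deriv_mono (c k) k z)) as H.
  replace (peval (fun j => Cmult (RtoC (INR (S j))) (c (S j))) (N - 1) z)
    with (sum_n (fun k => Cmult (c k) (Cmult (RtoC (INR k)) (pow_n z (pred k)))) N).
  - exact H.
  - replace N with (S (N - 1)) at 1 by lia. rewrite sumC_shift. unfold peval.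
    transitivity (Cplus (RtoC 0) (sum_n (fun j => Cmult (Cmult (RtoC (INR (S j))) (c (S j))) (pow_n z j)) (N - 1))).
    + f_equal; [simpl; cring|]. apply sumC_ext. intros; simpl pred; cring.
    + cring.
Qed.

Lemma circ_eit t : unit_circle (eit t).
Proof. unfold unit_circle, Cmod, eit; simpl. rewrite cos2sin2. apply sqrt_1. Qed.

Theorem theorem2p1
  (U : C -> Prop) (w v dv : C -> C) (a : nat -> nat -> C)
  (HUopen : open U)
  (HUcirc : forall z, unit_circle z -> U z)
  (Hwpos : forall t, Im (w (eit t)) = 0 /\ 0 < Re (w (eit t)))
  (Hwnorm : @is_RInt C_R_NormedModule (fun t => w (eit t)) 0 (2 * PI) (RtoC 1))
  (Hwdiff : forall z, U z -> @ex_derive C_AbsRing C_NormedModule w z)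
  (Hwv : forall z, U z -> w z = cexp (Copp (v z)))
  (Hdv : forall z, U z -> @is_derive C_AbsRing C_NormedModule v z (dv z))
  (Hmom : forall m : Z, ex_cint_dm (fun zeta => Cmult (cpowZ zeta m) (w zeta)))
  (Hint : forall (z : C) (m : Z), U z ->
     ex_cint_dm (fun zeta =>
       Cmult (Cmult (Cdiv (Cminus (dv z) (dv zeta)) (Cminus z zeta)) (cpowZ zeta m))
             (w zeta)))
  (Hdeg : forall n k, (n < k)%nat -> a n k = (RtoC 0))
  (Hlead : forall n, Im (a n n) = 0 /\ 0 < Re (a n n))
  (Horth : forall m n : nat,
     @is_RInt C_R_NormedModule
       (fun t => Cmult (Cmult (peval (a m) m (eit t)) (Cconj (peval (a n) n (eit t))))
                       (w (eit t)))
       0 (2 * PI) (if Nat.eqb m n then (RtoC 1) else (RtoC 0))) :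
  forall (n : nat) (z : C), (1 <= n)%nat -> U z ->
  @is_derive C_AbsRing C_NormedModule (peval (a n) n) z
    (Cplus
      (Cminus
        (Cmult (Cmult (RtoC (INR n)) (Cdiv (a (n - 1)%nat (n - 1)%nat) (a n n)))
               (peval (a (n - 1)%nat) (n - 1) z))
        (Cmult (Cmult Ci (precip (a n) n z))
          (cint_dz (fun zeta =>
             Cmult (Cmult (Cdiv (Cminus (dv z) (dv zeta)) (Cminus z zeta))
                          (Cmult (peval (a n) n zeta) (Cconj (precip (a n) n zeta))))
                   (w zeta)))))
      (Cmult (Cmult Ci (peval (a n) n z))
        (cint_dz (fun zeta =>
           Cmult (Cmult (Cdiv (Cminus (dv z) (dv zeta)) (Cminus z zeta))
                        (Cmult (peval (a n) n zeta) (Cconj (peval (a n) n zeta))))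
                 (w zeta))))).
Proof.
  intros n z Hn Hz.
  rewrite (final_value w a n z Hn Hmom Hlead Horth v dv
             (fun t => Hwv (eit t) (HUcirc _ (circ_eit t)))
             (fun t => Hdv (eit t) (HUcirc _ (circ_eit t)))
             (fun m => Hint z m Hz)).
  apply (deriv_peval (a n) n z Hn).
Qed.
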